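(* Let $(C_1,\sigma_1)$ and $(C_2,\sigma_2)$ be signed cycles and $(P,\pi)=(C_1,\sigma_1)\,\square\,(C_2,\sigma_2)$. Then $\chi_s(P,\pi)$ depends only on the types of the two cycles and is symmetric in them, given as follows: $BC_{even}\square BC_{even}$: $2$; $BC_{even}\square BC_{odd}$: $3$; $BC_{even}\square UC_{even}$: $4$; $BC_{even}\square UC_{odd}$: $3$; $BC_{odd}\square BC_{odd}$: $3$; $BC_{odd}\square UC_{even}$: $5$; $BC_{odd}\square UC_{odd}$: $5$; $UC_{even}\square UC_{even}$: $4$; $UC_{even}\square UC_{odd}$: $5$; $UC_{odd}\square UC_{odd}$: $3$.
   Context: A signed graph $(G,\sigma)$ is a simple loopless undirected graph with a signature $\sigma:E(G)\to\{+1,-1\}$. Switching a vertex negates the signs of its incident edges; two signatures are equivalent if one is obtained from the other by switching a set of vertices. A homomorphism of $(G,\sigma)$ to $(H,\pi)$ is a graph homomorphism $\varphi:G\to H$ for which there is a signature $\sigma'$ equivalent to $\sigma$ with $\pi(\varphi(u)\varphi(v))=\sigma'(uv)$ for every edge $uv$; $\chi_s(G,\sigma)$ is the smallest order of a signed graph to which $(G,\sigma)$ admits a homomorphism. A signed cycle (cycle of length at least $3$) is balanced if it has an even number of negative edges, unbalanced otherwise; $BC_{even}$, $BC_{odd}$, $UC_{even}$, $UC_{odd}$ denote balanced cycles of even length, balanced of odd length, unbalanced of even length, unbalanced of odd length. The Cartesian product $(G,\sigma)\,\square\,(H,\pi)$ is the signed graph on $G\,\square\,H$ where $(u,v_1)(u,v_2)$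 has sign $\pi(v_1v_2)$ and $(u_1,v)(u_2,v)$ has sign $\sigma(u_1u_2)$. *)

(* Defs.v *)
(* Signs are booleans: true = negative edge (-1), false = positive (+1);
   product of signs is xor (+). *)
From mathcomp Require Import all_boot.
Set Implicit Arguments. Unset Strict Implicit. Unset Printing Implicit Defensive.

(* A signed graph on a finite vertex type V: a simple loopless undirected graph
   (symmetric irreflexive adjacency) with a signature on its edges
   (given as a function on vertex pairs, symmetric on edges; only edge values matter). *)
Definition signed_graph (V : finType) (adj : rel V) (sg : V -> V -> bool) : Prop :=
  irreflexive adj /\ symmetric adj /\ (forall u v, adj u v -> sg u v = sg v u).

Definition is_shom (V W : finType) (adjG : rel V) (sG : V -> V -> bool)
  (adjH : rel W) (sH : W -> W -> bool) (phi : V -> W) : Prop :=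
  exists X : {set V}, forall u v, adjG u v ->
    adjH (phi u) (phi v) /\ sH (phi u) (phi v) = sG u v (+) (u \in X) (+) (v \in X).

Definition maps_to_order (V : finType) (adj : rel V) (sg : V -> V -> bool) (k : nat) : Prop :=
  exists (adjH : rel 'I_k) (sH : 'I_k -> 'I_k -> bool),
    signed_graph adjH sH /\ exists phi : V -> 'I_k, is_shom adj sg adjH sH phi.

Definition chis_eq (V : finType) (adj : rel V) (sg : V -> V -> bool) (k : nat) : Prop :=
  maps_to_order adj sg k /\ forall k', k' < k -> ~ maps_to_order adj sg k'.

(* The cycle C_n on 'I_n (meaningful for n >= 3): i ~ i+1 mod n. *)
Definition cyc_adj (n : nat) : rel 'I_n :=
  fun i j => (val j == i.+1 %% n) || (val i == j.+1 %% n).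

Definition neg_edges (n : nat) (sg : 'I_n -> 'I_n -> bool) : nat :=
  #|[set p : 'I_n * 'I_n | (val p.2 == p.1.+1 %% n) && sg p.1 p.2]|.

Inductive ctype := BCeven | BCodd | UCeven | UCodd.

Definition cycle_type (n : nat) (sg : 'I_n -> 'I_n -> bool) : ctype :=
  match ~~ odd (neg_edges sg), odd n with
  | true, false => BCeven
  | true, true => BCodd
  | false, false => UCeven
  | false, true => UCodd
  end.

Definition cprod_adj (U V : finType) (a1 : rel U) (a2 : rel V) : rel (U * V) :=
  fun x y => ((x.1 == y.1) && a2 x.2 y.2) || ((x.2 == y.2) && a1 x.1 y.1).

Definition cprod_sg (U V : finType) (s1 : U -> U -> bool) (s2 : V -> V -> bool)
  : U * V -> U * V -> bool :=
  fun x y => if x.1 == y.1 then s2 x.2 y.2 else s1 x.1 y.1.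

Definition chis_table (t1 t2 : ctype) : nat :=
  match t1, t2 with
  | BCeven, BCeven => 2
  | BCeven, BCodd | BCodd, BCeven => 3
  | BCeven, UCeven | UCeven, BCeven => 4
  | BCeven, UCodd | UCodd, BCeven => 3
  | BCodd, BCodd => 3
  | BCodd, UCeven | UCeven, BCodd => 5
  | BCodd, UCodd | UCodd, BCodd => 5
  | UCeven, UCeven => 4
  | UCeven, UCodd | UCodd, UCeven => 5
  | UCodd, UCodd => 3
  end.

(* Main.v *)
Require Import Defs.
From mathcomp Require Import all_boot.
From mathcomp Require Import zify.
Set Implicit Arguments. Unset Strict Implicit. Unset Printing Implicit Defensive.


Lemma ordS_lt n (i : 'I_n) : i.+1 < n -> (ordS i : nat) = i.+1.
Proof. by move=> h; rewrite /= modn_small. Qed.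

Lemma ordS_last n (i : 'I_n) : i.+1 = n -> (ordS i : nat) = 0.
Proof. by move=> h; rewrite /= h modnn. Qed.

Lemma cyc_adjE n (i j : 'I_n) : cyc_adj i j = (j == ordS i) || (i == ordS j).
Proof. by []. Qed.

Lemma ordS_neq n (i : 'I_n) : 1 < n -> (ordS i == i) = false.
Proof.
move=> h; apply/negbTE; apply/eqP => /(congr1 val) /=.
case: (ltnP i.+1 n) => hi.
  by rewrite modn_small //; lia.
have e : i.+1 = n by apply/eqP; rewrite eqn_leq hi ltn_ord.
rewrite e modnn; lia.
Qed.

Lemma cyc_irr n : 1 < n -> irreflexive (@cyc_adj n).
Proof. by move=> h i; rewrite cyc_adjE eq_sym ordS_neq. Qed.

Lemma cyc_sym n : symmetric (@cyc_adj n).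
Proof. by move=> i j; rewrite !cyc_adjE orbC. Qed.

Lemma bx_tele n (F : 'I_n -> bool) :
  \big[addb/false]_(i < n) (F i (+) F (ordS i)) = false.
Proof.
rewrite big_split /=.
by rewrite [X in X (+) _](reindex_inj (@ordS_inj n)) /= addbb.
Qed.

Lemma bx_const n (b : bool) : \big[addb/false]_(i < n) b = b && odd n.
Proof.
rewrite big_const_ord; elim: n => [|n IH] /=; first by rewrite andbF.
by rewrite IH; case: (b); case: (odd n).
Qed.

Lemma odd_sum_bx I (r : seq I) (P : pred I) (F : I -> nat) :
  odd (\sum_(i <- r | P i) F i) = \big[addb/false]_(i <- r | P i) odd (F i).
Proof. by apply: (big_morph odd oddD). Qed.

Definition bxs n (s : 'I_n -> 'I_n -> bool) := \big[addb/false]_(i < n) s i (ordS i).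

Lemma neg_edges_sum n (s : 'I_n -> 'I_n -> bool) :
  neg_edges s = \sum_(i < n) s i (ordS i).
Proof.
rewrite /neg_edges -sum1_card big_mkcond /=.
set A := [set p | _].
have -> : \sum_(p : 'I_n * 'I_n) (if p \in A then 1 else 0) =
   \sum_(i < n) \sum_(j < n) (if (i,j) \in A then 1 else 0).
  by rewrite pair_big; apply: eq_bigr => -[i j].
apply: eq_bigr => i _.
rewrite (bigD1 (ordS i)) //= /A inE /= eqxx /= big1 ?addn0; first by case: (s _ _).
move=> j hj; rewrite /A inE /=.
suff -> : (val j == i.+1 %% n) = false by [].
by apply/negbTE; apply: contra hj => /eqP e; apply/eqP/val_inj.
Qed.

Lemma neg_edges_odd n (s : 'I_n -> 'I_n -> bool) : odd (neg_edges s) = bxs s.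
Proof.
by rewrite neg_edges_sum odd_sum_bx /bxs; apply: eq_bigr => i _; case: (s _ _).
Qed.

Definition pot n (s : 'I_n -> 'I_n -> bool) (i : 'I_n) :=
  \big[addb/false]_(k < n | k < i) s k (ordS k).

Lemma pot_step n (s : 'I_n -> 'I_n -> bool) (i : 'I_n) :
  s i (ordS i) = pot s i (+) pot s (ordS i) (+) (bxs s && (i == n.-1 :> nat)).
Proof.
case: (ltnP i.+1 n) => hi.
- have e := ordS_lt hi.
  rewrite /pot e.
  rewrite [X in _ = _ (+) X (+) _](bigD1 i) ?ltnSn //=.
  have -> : (i == n.-1 :> nat) = false by apply/negbTE; lia.
  rewrite andbF addbF.
  rewrite [\big[addb/false]_(k < n | (k < i.+1) && (k != i)) _](eq_bigl (fun k : 'I_n => k < i)); first by rewrite addbA addbC addbA addbb.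
  by move=> k /=; rewrite -val_eqE /=; lia.
- have e1 : i.+1 = n by apply/eqP; rewrite eqn_leq hi ltn_ord.
  rewrite /pot ordS_last // (@big_pred0 _ _ _ _ _ (fun k : 'I_n => k < 0)) // addbF.
  have -> : (i == n.-1 :> nat) = true by apply/eqP; lia.
  rewrite andbT /bxs [\big[addb/false]_(k < n) _](bigD1 i) //=.
  rewrite [\big[addb/false]_(k < n | k != i) _](eq_bigl (fun k : 'I_n => k < i)); first by rewrite addbA addbC addbA addbb.
  move=> k /=; rewrite -val_eqE /=; have := ltn_ord k; lia.
Qed.

Definition memN (negs : seq (nat*nat)) (x y : nat) := ((x, y) \in negs) || ((y, x) \in negs).
Definition Ksg k (negs : seq (nat*nat)) : 'I_k -> 'I_k -> bool :=
  fun x y => memN negs (val x) (val y).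
Lemma Ksg_sym k negs (a b : 'I_k) : Ksg negs a b = Ksg negs b a.
Proof. by rewrite /Ksg /memN orbC. Qed.

Lemma cyc_shom n k (s : 'I_n -> 'I_n -> bool) (adjT : rel 'I_k) (sT : 'I_k -> 'I_k -> bool) (psi : 'I_n -> 'I_k) :
  signed_graph (@cyc_adj n) s -> symmetric adjT -> (forall a b, sT a b = sT b a) ->
  (forall i : 'I_n, adjT (psi i) (psi (ordS i)) && (sT (psi i) (psi (ordS i)) == bxs s && (i == n.-1 :> nat))) ->
  is_shom (@cyc_adj n) s adjT sT psi.
Proof.
move=> [_ [_ ssym]] asym tsym H; exists [set i | pot s i] => u v.
rewrite cyc_adjE => /orP [/eqP -> | /eqP ->].
- case/andP: (H u) => ha /eqP hs; split => //.
  rewrite hs !inE (pot_step s u).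
  move: (pot s u) (pot s (ordS u)) (bxs s && _) => a b c.
  by case: a; case: b; case: c.
- case/andP: (H v) => ha /eqP hs; split; first by rewrite asym.
  rewrite tsym hs !inE -ssym; last by rewrite cyc_adjE eqxx.
  rewrite (pot_step s v).
  move: (pot s v) (pot s (ordS v)) (bxs s && _) => a b c.
  by case: a; case: b; case: c.
Qed.

Lemma ordS_cases n (i : 'I_n) :
  ((i.+1 < n) /\ (ordS i : nat) = i.+1) \/ ((i.+1 = n) /\ (ordS i : nat) = 0).
Proof.
case: (ltnP i.+1 n) => h; first by left; split => //; apply: ordS_lt.
have e : i.+1 = n by apply/eqP; rewrite eqn_leq h ltn_ord.
by right; split => //; apply: ordS_last.
Qed.

Lemma oddS_eq (a b : nat) : a.+1 = b -> odd b = ~~ odd a.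
Proof. by move=> <-. Qed.

Lemma inordV k m : m < k.+1 -> \val (@inord k m) = m.
Proof. exact: inordK. Qed.

Definition psiE n (i : 'I_n) : 'I_2 := inord (odd i).
Definition psiO n (i : 'I_n) : 'I_3 := inord (if (i == n.-1 :> nat) then 2 else odd i).
Definition psiU n (i : 'I_n) : 'I_4 := inord (if i < 4 then (i : nat) else 2 + odd i).

Lemma step_E n (i : 'I_n) : ~~ odd n ->
  @cyc_adj 2 (psiE i) (psiE (ordS i)) && (Ksg [::] (psiE i) (psiE (ordS i)) == false && (i == n.-1 :> nat)).
Proof.
move=> hn; have ho : odd (ordS i) = ~~ odd i.
  case: (ordS_cases i) => [[h ->] // | [h ->]].
  by move: hn; rewrite (oddS_eq h); case: (odd i).
rewrite /psiE /cyc_adj /Ksg /memN ho !inordV; try by case: (odd i).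
Qed.

Lemma step_O n (i : 'I_n) (b : bool) : odd n -> 3 <= n ->
  @cyc_adj 3 (psiO i) (psiO (ordS i)) &&
  (Ksg (if b then [:: (0,2)] else [::]) (psiO i) (psiO (ordS i)) == b && (i == n.-1 :> nat)).
Proof.
move=> hn h3; rewrite /psiO /cyc_adj /Ksg /memN.
case: (ordS_cases i) => [[h ->] | [h ->]].
- case: (ltngtP i.+2 n) => h2.
  + have -> : (i == n.-1 :> nat) = false by apply/negbTE; lia.
    have -> : (i.+1 == n.-1 :> nat) = false by apply/negbTE; lia.
    rewrite !inordV /=; try by case: (odd i).
    by case: (odd i); case: b.
  + lia.
  + have -> : (i == n.-1 :> nat) = false by apply/negbTE; lia.
    have -> : (i.+1 == n.-1 :> nat) = true by apply/eqP; lia.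
    have oi : odd i by move: hn; rewrite (oddS_eq h2) /= negbK.
    rewrite oi !inordV //=.
    by case: b.
- have -> : (i == n.-1 :> nat) = true by apply/eqP; lia.
  have -> : (0 == n.-1) = false by apply/negbTE; lia.
  rewrite !inordV //=.
  by case: b.
Qed.

Lemma step_U n (i : 'I_n) : ~~ odd n -> 3 <= n ->
  @cyc_adj 4 (psiU i) (psiU (ordS i)) &&
  (Ksg [:: (0,3)] (psiU i) (psiU (ordS i)) == true && (i == n.-1 :> nat)).
Proof.
move=> hn h3; rewrite /psiU /cyc_adj /Ksg /memN.
have ge4 : 4 <= n by case: (ltngtP n 3) => // e; [lia | by rewrite e in hn].
case: (ordS_cases i) => [[h ->] | [h ->]].
- have -> : (i == n.-1 :> nat) = false by apply/negbTE; lia.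
  case: (ltngtP i 3) => h3'.
  + have -> : i < 4 by lia.
    have -> : i.+1 < 4 by lia.
    rewrite !inordV //; try lia.
    by case: (nat_of_ord i) h3' => [|[|[|]]].
  + have -> : (i < 4) = false by apply/negbTE; lia.
    have -> : (i.+1 < 4) = false by apply/negbTE; lia.
    rewrite !inordV /=; try by case: (odd i).
  + have -> : (i < 4) = true by lia.
    have -> : (i.+1 < 4) = false by apply/negbTE; lia.
    rewrite h3' !inordV //.
- have -> : (i == n.-1 :> nat) = true by apply/eqP; lia.
  have oi : odd i by move: hn; rewrite (oddS_eq h) negbK.
  case: (ltnP i 4) => h4.
  + have e3 : (i : nat) = 3 by lia.
    by rewrite e3 !inordV.
  + by rewrite oi !inordV.
Qed.

Lemma prod_shom (U1 U2 W1 W2 : finType) (a1 : rel U1) s1 (a2 : rel U2) s2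
  (h1 : rel W1) t1 (h2 : rel W2) t2 (p1 : U1 -> W1) (p2 : U2 -> W2) :
  irreflexive a1 -> irreflexive h1 -> is_shom a1 s1 h1 t1 p1 -> is_shom a2 s2 h2 t2 p2 ->
  is_shom (cprod_adj a1 a2) (cprod_sg s1 s2) (cprod_adj h1 h2) (cprod_sg t1 t2)
    (fun u => (p1 u.1, p2 u.2)).
Proof.
move=> ia ih [X1 H1] [X2 H2]; exists [set u | (u.1 \in X1) (+) (u.2 \in X2)] => u v.
rewrite /cprod_adj /cprod_sg !inE /= => /orP [/andP [/eqP e ha] | /andP [/eqP e ha]].
- case: (H2 _ _ ha) => hb hs; rewrite e eqxx /= hb; split => //.
  rewrite hs eqxx; move: (u.2 \in X2) (v.2 \in X2) (v.1 \in X1) (s2 u.2 v.2) => a b c d.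
  by case: a; case: b; case: c; case: d.
- case: (H1 _ _ ha) => hb hs.
  have ne : (p1 u.1 == p1 v.1) = false.
    by apply/negbTE; apply/eqP => e'; move: hb; rewrite e' ih.
  have ne' : (u.1 == v.1) = false.
    by apply/negbTE; apply/eqP => e'; move: ha; rewrite e' ia.
  rewrite ne ne' e eqxx hb orbT; split => //.
  rewrite hs; move: (u.1 \in X1) (v.1 \in X1) (v.2 \in X2) (s1 u.1 v.1) => a b c d.
  by case: a; case: b; case: c; case: d.
Qed.

Lemma comp_shom (U W Z : finType) (aG : rel U) sG (aH : rel W) sH (aT : rel Z) sT
  (f : U -> W) (g : W -> Z) :
  is_shom aG sG aH sH f -> is_shom aH sH aT sT g -> is_shom aG sG aT sT (fun u => g (f u)).
Proof.
move=> [X1 H1] [X2 H2]; exists [set u | (u \in X1) (+) (f u \in X2)] => u v huv.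
case: (H1 _ _ huv) => ha hs; case: (H2 _ _ ha) => hb ht; split => //.
rewrite ht hs !inE; move: (u \in X1) (v \in X1) (f u \in X2) (f v \in X2) (sG u v) => a b c d e.
by case: a; case: b; case: c; case: d; case: e.
Qed.

Definition Kadj k : rel 'I_k := fun x y => x != y.

Lemma K_sg k negs : signed_graph (@Kadj k) (Ksg negs).
Proof.
split; first by move=> x; rewrite /Kadj eqxx.
split; first by move=> x y; rewrite /Kadj eq_sym.
by move=> x y _; apply: Ksg_sym.
Qed.

Lemma cyc_sg k negs : 1 < k -> signed_graph (@cyc_adj k) (Ksg negs).
Proof.
move=> hk; split; first exact: cyc_irr.
split; first exact: cyc_sym.
by move=> x y _; apply: Ksg_sym.
Qed.

Definition cycN n (x y : nat) := (y == x.+1 %% n) || (x == y.+1 %% n).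
Definition adjN a b (i j i' j' : nat) := ((i == i') && cycN b j j') || ((j == j') && cycN a i i').
Definition sgN (n1 n2 : seq (nat*nat)) (i j i' j' : nat) := if i == i' then memN n2 j j' else memN n1 i i'.
Definition allN n (P : nat -> bool) := all P (iota 0 n).
Definition chk a b k n1 n2 negs (tbl xtbl : seq nat) :=
  let f i j := nth 0 tbl (i * b + j) in
  let x i j := nth 0 xtbl (i * b + j) == 1 in
  allN a (fun i => allN b (fun j => (f i j < k) && allN a (fun i' => allN b (fun j' =>
    adjN a b i j i' j' ==> (f i j != f i' j') && (memN negs (f i j) (f i' j') == sgN n1 n2 i j i' j' (+) x i j (+) x i' j'))))).
Definition phiT a b k (tbl : seq nat) : 'I_a * 'I_b -> 'I_k.+1 :=
  fun u => inord (nth 0 tbl (val u.1 * b + val u.2)).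

Lemma allNP n P i : allN n P -> i < n -> P i.
Proof. by move=> /allP h hi; apply: h; rewrite mem_iota. Qed.

Lemma chk_shom a b k n1 n2 negs tbl xtbl : chk a b k.+1 n1 n2 negs tbl xtbl ->
  is_shom (cprod_adj (@cyc_adj a) (@cyc_adj b)) (cprod_sg (Ksg n1) (Ksg n2))
          (@Kadj k.+1) (Ksg negs) (@phiT a b k tbl).
Proof.
move=> hc; exists [set u : 'I_a * 'I_b | nth 0 xtbl (val u.1 * b + val u.2) == 1].
move=> [[i hi] [j hj]] [[i' hi'] [j' hj']] hadj.
have := allNP (allNP hc hi) hj => /andP [hf /allNP /(_ hi') /allNP /(_ hj') himp].
have := allNP (allNP hc hi') hj' => /andP [hf' _].
have hA : adjN a b i j i' j' := hadj.
move: himp; rewrite hA /= => /andP [hne /eqP hs].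
rewrite /Kadj /phiT /Ksg !inE /= -val_eqE !inordV //; split => //.
Qed.

Lemma shom_maps (V : finType) (adj : rel V) sg k negs (phi : V -> 'I_k) :
  is_shom adj sg (@Kadj k) (Ksg negs) phi -> maps_to_order adj sg k.
Proof. by move=> h; exists (@Kadj k), (Ksg negs); split; [apply: K_sg | exists phi]. Qed.

Lemma maps_mono (V : finType) (adj : rel V) sg k k' : k <= k' ->
  maps_to_order adj sg k -> maps_to_order adj sg k'.
Proof.
move=> hk [aH [sH [[irr [sym ssym]] [phi [X HX]]]]].
pose aH' (x y : 'I_k') := if (insub (val x) : option 'I_k) is Some x0 then
   (if (insub (val y) : option 'I_k) is Some y0 then aH x0 y0 else false) else false.
pose sH' (x y : 'I_k') := if (insub (val x) : option 'I_k) is Some x0 then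
   (if (insub (val y) : option 'I_k) is Some y0 then sH x0 y0 else false) else false.
have iw : forall x : 'I_k, (insub (val (widen_ord hk x)) : option 'I_k) = Some x.
  by move=> x; rewrite /= valK.
exists aH', sH'; split.
  split; first by move=> x; rewrite /aH'; case: (insub (val x)) => // x0; apply: irr.
  split; first by move=> x y; rewrite /aH'; case: (insub (val x)) => [x0|]; case: (insub (val y)) => [y0|] //; apply: sym.
  move=> x y; rewrite /aH' /sH'; case: (insub (val x)) => [x0|]; case: (insub (val y)) => [y0|] //.
  exact: ssym.
exists (fun u => widen_ord hk (phi u)), X => u v huv.
by rewrite /aH' /sH' !iw; apply: HX.
Qed.

Lemma walk_sign (V W : finType) (adjG : rel V) sG (adjH : rel W) sH (phi : V -> W) L (f : 'I_L -> V) (X : {set V}) :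
  (forall u v, adjG u v -> adjH (phi u) (phi v) /\ sH (phi u) (phi v) = sG u v (+) (u \in X) (+) (v \in X)) ->
  (forall i, adjG (f i) (f (ordS i))) ->
  \big[addb/false]_(i < L) sH (phi (f i)) (phi (f (ordS i))) = \big[addb/false]_(i < L) sG (f i) (f (ordS i)).
Proof.
move=> H hf.
rewrite (eq_bigr (fun i => sG (f i) (f (ordS i)) (+) ((f i \in X) (+) (f (ordS i) \in X)))).
  by rewrite big_split /= (bx_tele (fun i => f i \in X)) addbF.
by move=> i _; rewrite (proj2 (H _ _ (hf i))) addbA.
Qed.

Lemma no2_cycle (V : finType) (adjG : rel V) sG L (f : 'I_L -> V) :
  odd L -> (forall i, adjG (f i) (f (ordS i))) -> ~ maps_to_order adjG sG 2.
Proof.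
move=> hL hf [aH [sH [[irr _] [phi [X HX]]]]].
have key : forall i, ((phi (f i) : nat) == 0) (+) ((phi (f (ordS i)) : nat) == 0) = true.
  move=> i; have [ha _] := HX _ _ (hf i).
  have ne : phi (f i) != phi (f (ordS i)).
    by apply/eqP => e; move: ha; rewrite e irr.
  move: ne; rewrite -val_eqE.
  case: (phi (f i)) => [[|[|x]] hx] //; case: (phi (f (ordS i))) => [[|[|y]] hy] //.
have := bx_tele (fun i => (phi (f i) : nat) == 0).
by rewrite (eq_bigr (fun _ => true)) ?bx_const ?hL // => i _; rewrite key.
Qed.

Lemma sw3 (s : 'I_3 -> 'I_3 -> bool) : exists th (y : nat -> bool),
  forall a b : 'I_3, a < b -> s a b = th (+) y a (+) y b.
Proof.
pose s01 := s (inord 0) (inord 1); pose s02 := s (inord 0) (inord 2); pose s12 := s (inord 1) (inord 2).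
pose th := s01 (+) s02 (+) s12.
exists th, (fun x => if x == 0 then false else if x == 1 then s01 (+) th else s02 (+) th).
move=> a b hab; rewrite -[a]inord_val -[b]inord_val.
have ha := ltn_ord a; have hb := ltn_ord b.
move: (a : nat) (b : nat) ha hb hab => x z hx hz hxz.
have [e|[e|e]] : ((x == 0) && (z == 1)) \/ ((x == 0) && (z == 2)) \/ ((x == 1) && (z == 2)) by lia.
- case/andP: e => /eqP -> /eqP ->; rewrite -/s01 /th /=.
  rewrite /th /s01 /s02 /s12 !inordK //=; by case: (s (inord 0) (inord 1)); case: (s (inord 0) (inord 2)); case: (s (inord 1) (inord 2)).
- case/andP: e => /eqP -> /eqP ->; rewrite -/s02 /th /=.
  rewrite /th /s01 /s02 /s12 !inordK //=; by case: (s (inord 0) (inord 1)); case: (s (inord 0) (inord 2)); case: (s (inord 1) (inord 2)).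
- case/andP: e => /eqP -> /eqP ->; rewrite -/s12 /th /=.
  rewrite /th /s01 /s02 /s12 !inordK //=; by case: (s (inord 0) (inord 1)); case: (s (inord 0) (inord 2)); case: (s (inord 1) (inord 2)).
Qed.

Definition tab4 (v01 v02 v03 v12 v13 v23 : bool) (x y : nat) : bool :=
  match x, y with 0,1 => v01 | 0,2 => v02 | 0,3 => v03 | 1,2 => v12 | 1,3 => v13 | 2,3 => v23 | _,_ => false end.
Definition bitf (w : seq bool) (x : nat) : bool := nth false w x.
Definition cands : seq (seq bool) := [:: [:: false; false; false; false]; [:: false; false; false; true]; [:: false; false; true; false]; [:: false; false; true; true]; [:: false; true; false; false]; [:: false; true; false; true]; [:: false; true; true; false]; [:: false; true; true; true]; [:: true; false; false; false]; [:: true; false; false; true]; [:: true; false; true; false]; [:: true; false; true; true]; [:: true; true; false; false]; [:: true; true; false; true]; [:: true; true; true; false]; [:: true; true; true; true]].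
Definition ok4 v01 v02 v03 v12 v13 v23 wy wc :=
  all (fun x => all (fun y => (x < y) ==> (tab4 v01 v02 v03 v12 v13 v23 x y == bitf wy x (+) bitf wy y (+) (bitf wc x && bitf wc y))) (iota 0 4)) (iota 0 4).
Definition search4 v01 v02 v03 v12 v13 v23 :=
  has (fun wy => has (fun wc => ok4 v01 v02 v03 v12 v13 v23 wy wc) cands) cands.
Lemma search4_all v01 v02 v03 v12 v13 v23 : search4 v01 v02 v03 v12 v13 v23.
Proof. by case: v01; case: v02; case: v03; case: v12; case: v13; case: v23; vm_compute. Qed.

Lemma allIP n (P : nat -> bool) i : all P (iota 0 n) -> i < n -> P i.
Proof. by move=> /allP h hi; apply: h; rewrite mem_iota. Qed.

Lemma sw4 (s : 'I_4 -> 'I_4 -> bool) : exists (y c : nat -> bool),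
  forall a b : 'I_4, a < b -> s a b = y a (+) y b (+) (c a && c b).
Proof.
pose v01 := s (inord 0) (inord 1); pose v02 := s (inord 0) (inord 2); pose v03 := s (inord 0) (inord 3).
pose v12 := s (inord 1) (inord 2); pose v13 := s (inord 1) (inord 3); pose v23 := s (inord 2) (inord 3).
have /hasP [wy _ /hasP [wc _ hok]] := search4_all v01 v02 v03 v12 v13 v23.
exists (bitf wy), (bitf wc) => a b hab.
have ha := ltn_ord a; have hb := ltn_ord b.
have := allIP (allIP hok ha) hb.
rewrite hab /= => /eqP <-.
rewrite -[a]inord_val -[b]inord_val !inordK //.
move: (a : nat) (b : nat) ha hb hab => x z hx hz hxz.
by case: x hx hxz => [|[|[|[|x]]]] hx hxz //; case: z hz hxz => [|[|[|[|z]]]] hz hxz.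
Qed.

Lemma no3_cycle (V : finType) (adjG : rel V) sG L (f : 'I_L -> V) :
  ~~ odd L -> (forall i, adjG (f i) (f (ordS i))) ->
  \big[addb/false]_(i < L) sG (f i) (f (ordS i)) = true -> ~ maps_to_order adjG sG 3.
Proof.
move=> hL hf hs [aH [sH [[irr [sym ssym]] [phi [X HX]]]]].
have [th [y hy]] := sw3 sH.
have hy' : forall a b, aH a b -> sH a b = th (+) y a (+) y b.
  move=> a b hab; case: (ltngtP a b) => h; first exact: hy.
  - by rewrite ssym // hy // addbAC.
  - by move: hab; rewrite (_ : a = b) ?irr //; apply: val_inj.
have := walk_sign HX hf; rewrite hs.
rewrite (eq_bigr (fun i => th (+) (y (phi (f i)) (+) y (phi (f (ordS i)))))).
  by rewrite big_split /= (bx_tele (fun i => y (phi (f i)))) bx_const (negbTE hL) andbF.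
by move=> i _; rewrite hy' ?addbA //; case: (HX _ _ (hf i)).
Qed.

Lemma row_adj n m (i : 'I_n) (j : 'I_m) : cprod_adj (@cyc_adj n) (@cyc_adj m) (i, j) (ordS i, j).
Proof. by rewrite /cprod_adj /=; apply/orP; right; rewrite eqxx cyc_adjE eqxx. Qed.
Lemma col_adj n m (i : 'I_n) (j : 'I_m) : cprod_adj (@cyc_adj n) (@cyc_adj m) (i, j) (i, ordS j).
Proof. by rewrite /cprod_adj /=; apply/orP; left; rewrite eqxx cyc_adjE eqxx. Qed.
Lemma row_sg n m (s1 : 'I_n -> 'I_n -> bool) (s2 : 'I_m -> 'I_m -> bool) (i : 'I_n) (j : 'I_m) :
  1 < n -> cprod_sg s1 s2 (i, j) (ordS i, j) = s1 i (ordS i).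
Proof. by move=> hn; rewrite /cprod_sg /= eq_sym ordS_neq. Qed.
Lemma col_sg n m (s1 : 'I_n -> 'I_n -> bool) (s2 : 'I_m -> 'I_m -> bool) (i : 'I_n) (j : 'I_m) :
  cprod_sg s1 s2 (i, j) (i, ordS j) = s2 j (ordS j).
Proof. by rewrite /cprod_sg /= eqxx. Qed.

Lemma no1 n m s1 s2 : 3 <= n -> 3 <= m ->
  ~ maps_to_order (cprod_adj (@cyc_adj n) (@cyc_adj m)) (cprod_sg s1 s2) 1.
Proof.
move=> hn hm [aH [sH [[irr _] [phi [X HX]]]]].
have h0 : 0 < n by lia. have h0' : 0 < m by lia.
have [ha _] := HX _ _ (row_adj (Ordinal h0) (Ordinal h0')).
by move: ha; rewrite [phi (ordS _, _)]ord1 [phi (Ordinal _, _)]ord1 irr.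
Qed.

Lemma no2 n m s1 s2 : 3 <= n -> 3 <= m -> odd n || odd m ->
  ~ maps_to_order (cprod_adj (@cyc_adj n) (@cyc_adj m)) (cprod_sg s1 s2) 2.
Proof.
move=> hn hm /orP [ho | ho].
- have h0' : 0 < m by lia.
  by apply: (@no2_cycle _ _ _ n (fun i => (i, Ordinal h0'))) => // i; apply: row_adj.
- have h0 : 0 < n by lia.
  by apply: (@no2_cycle _ _ _ m (fun j => (Ordinal h0, j))) => // j; apply: col_adj.
Qed.

Lemma no3 n m s1 s2 : 3 <= n -> 3 <= m -> (bxs s1 && ~~ odd n) || (bxs s2 && ~~ odd m) ->
  ~ maps_to_order (cprod_adj (@cyc_adj n) (@cyc_adj m)) (cprod_sg s1 s2) 3.
Proof.
move=> hn hm /orP [/andP [hb ho] | /andP [hb ho]].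
- have h0' : 0 < m by lia.
  apply: (@no3_cycle _ _ _ n (fun i => (i, Ordinal h0'))) => //; first by move=> i; apply: row_adj.
  apply: (etrans _ hb); apply: eq_bigr => i _; rewrite row_sg //; lia.
- have h0 : 0 < n by lia.
  apply: (@no3_cycle _ _ _ m (fun j => (Ordinal h0, j))) => //; first by move=> j; apply: col_adj.
  all: try (apply: (etrans _ hb); apply: eq_bigr => j _; by rewrite col_sg).
Qed.

Lemma sq_nat (a b c d : bool) : (a && b) (+) (c && d) (+) (a && c) (+) (b && d) = false ->
  (a && b) + (c && d) = (a && c) + (b && d).
Proof. by case: a; case: b; case: c; case: d. Qed.

Lemma no4 n m (s1 : 'I_n -> 'I_n -> bool) (s2 : 'I_m -> 'I_m -> bool) : 3 <= n -> 3 <= m ->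
  (bxs s1 && odd m) != (bxs s2 && odd n) ->
  ~ maps_to_order (cprod_adj (@cyc_adj n) (@cyc_adj m)) (cprod_sg s1 s2) 4.
Proof.
move=> hn hm hneq [aH [sH [[irr [sym ssym]] [phi [X HX]]]]].
have [y [c hyc]] := sw4 sH.
have hT : forall a b, aH a b -> sH a b = y a (+) y b (+) (c a && c b).
  move=> a b hab; case: (ltngtP a b) => h; first exact: hyc.
  - rewrite ssym // hyc //.
    by case: (y a); case: (y b); case: (c a); case: (c b).
  - by move: hab; rewrite (_ : a = b) ?irr //; apply: val_inj.
pose t u := c (phi u).
pose z u := (u \in X) (+) y (phi u).
have key : forall u v, cprod_adj (@cyc_adj n) (@cyc_adj m) u v ->
    (t u && t v) = cprod_sg s1 s2 u v (+) z u (+) z v.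
  move=> u v huv; case: (HX u v huv) => ha hs.
  have := hT _ _ ha; rewrite hs /t /z.
  move: (c (phi u)) (c (phi v)) (y (phi u)) (y (phi v)) (u \in X) (v \in X) (cprod_sg s1 s2 u v).
  by do 7!case.
have n1 : 1 < n by lia.
have rowx : forall j : 'I_m, \big[addb/false]_(i < n) (t (i, j) && t (ordS i, j)) = bxs s1.
  move=> j; rewrite (eq_bigr (fun i => s1 i (ordS i) (+) (z (i, j) (+) z (ordS i, j)))).
    by rewrite big_split /= (bx_tele (fun i => z (i, j))) addbF.
  by move=> i _; rewrite key ?row_adj // row_sg // addbA.
have colx : forall i : 'I_n, \big[addb/false]_(j < m) (t (i, j) && t (i, ordS j)) = bxs s2.
  move=> i; rewrite (eq_bigr (fun j => s2 j (ordS j) (+) (z (i, j) (+) z (i, ordS j)))).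
    by rewrite big_split /= (bx_tele (fun j => z (i, j))) addbF.
  by move=> j _; rewrite key ?col_adj // col_sg addbA.
have sq : forall (i : 'I_n) (j : 'I_m),
    (t (i, j) && t (ordS i, j)) + (t (i, ordS j) && t (ordS i, ordS j)) =
    (t (i, j) && t (i, ordS j)) + (t (ordS i, j) && t (ordS i, ordS j)).
  move=> i j; apply: sq_nat.
  rewrite (key _ _ (row_adj i j)) (key _ _ (row_adj i (ordS j))).
  rewrite (key _ _ (col_adj i j)) (key _ _ (col_adj (ordS i) j)).
  rewrite !row_sg // !col_sg.
  move: (s1 i (ordS i)) (s2 j (ordS j)) (z (i, j)) (z (ordS i, j)) (z (i, ordS j)) (z (ordS i, ordS j)).
  by do 6!case.
pose H := \sum_(i < n) \sum_(j < m) (t (i, j) && t (ordS i, j)).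
pose V := \sum_(i < n) \sum_(j < m) (t (i, j) && t (i, ordS j)).
have eL : \sum_(i < n) \sum_(j < m) ((t (i, j) && t (ordS i, j)) + (t (i, ordS j) && t (ordS i, ordS j))) = H + H.
  rewrite /H -big_split /=; apply: eq_bigr => i _.
  rewrite big_split /=; congr (_ + _).
  by rewrite [RHS](reindex_inj (@ordS_inj m)).
have eR : \sum_(i < n) \sum_(j < m) ((t (i, j) && t (i, ordS j)) + (t (ordS i, j) && t (ordS i, ordS j))) = V + V.
  rewrite /V [X in _ + X](reindex_inj (@ordS_inj n)) /= -big_split /=; apply: eq_bigr => i _.
  by rewrite big_split.
have HV : H = V.
  suff : H + H = V + V by lia.
  rewrite -eL -eR; apply: eq_bigr => i _; apply: eq_bigr => j _; exact: sq.
have oH : odd H = bxs s1 && odd m.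
  rewrite /H exchange_big /= odd_sum_bx -bx_const; apply: eq_bigr => j _.
  by rewrite odd_sum_bx -(rowx j); apply: eq_bigr => i _; case: (_ && _).
have oV : odd V = bxs s2 && odd n.
  rewrite /V odd_sum_bx -bx_const; apply: eq_bigr => i _.
  by rewrite odd_sum_bx -(colx i); apply: eq_bigr => j _; case: (_ && _).
by move: hneq; rewrite -oH -oV HV eqxx.
Qed.
Lemma fE n (s : 'I_n -> 'I_n -> bool) : 3 <= n -> odd n = false -> bxs s = false ->
  signed_graph (@cyc_adj n) s -> is_shom (@cyc_adj n) s (@cyc_adj 2) (Ksg [::]) (@psiE n).
Proof.
move=> h3 ho hb hs; apply: cyc_shom; [exact: hs | exact: cyc_sym | move=> x y; exact: Ksg_sym |].
by move=> i; rewrite hb; apply: step_E; rewrite ho.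
Qed.

Lemma fO n (s : 'I_n -> 'I_n -> bool) b : 3 <= n -> odd n = true -> bxs s = b ->
  signed_graph (@cyc_adj n) s ->
  is_shom (@cyc_adj n) s (@cyc_adj 3) (Ksg (if b then [:: (0,2)] else [::])) (@psiO n).
Proof.
move=> h3 ho hb hs; apply: cyc_shom; [exact: hs | exact: cyc_sym | move=> x y; exact: Ksg_sym |].
by move=> i; rewrite hb; apply: step_O; rewrite ?ho.
Qed.

Lemma fU n (s : 'I_n -> 'I_n -> bool) : 3 <= n -> odd n = false -> bxs s = true ->
  signed_graph (@cyc_adj n) s -> is_shom (@cyc_adj n) s (@cyc_adj 4) (Ksg [:: (0,3)]) (@psiU n).
Proof.
move=> h3 ho hb hs; apply: cyc_shom; [exact: hs | exact: cyc_sym | move=> x y; exact: Ksg_sym |].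
by move=> i; rewrite hb; apply: step_U; rewrite ?ho.
Qed.

Lemma ub n m (s1 : 'I_n -> 'I_n -> bool) (s2 : 'I_m -> 'I_m -> bool) a b k n1 n2 negs tbl xtbl
  (p1 : 'I_n -> 'I_a) (p2 : 'I_m -> 'I_b) :
  is_shom (@cyc_adj n) s1 (@cyc_adj a) (Ksg n1) p1 ->
  is_shom (@cyc_adj m) s2 (@cyc_adj b) (Ksg n2) p2 -> 3 <= n ->
  (1 < a) && chk a b k.+1 n1 n2 negs tbl xtbl ->
  maps_to_order (cprod_adj (@cyc_adj n) (@cyc_adj m)) (cprod_sg s1 s2) k.+1.
Proof.
move=> F1 F2 hn /andP [ha hc].
apply: (@shom_maps _ _ _ _ negs).
apply: (comp_shom (prod_shom _ _ F1 F2) (chk_shom hc)); [apply: (@cyc_irr n); lia | apply: (@cyc_irr a); lia].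
Qed.

Lemma lower_from (V : finType) (adj : rel V) sg K :
  ~ maps_to_order adj sg K -> forall k', k' < K.+1 -> ~ maps_to_order adj sg k'.
Proof. by move=> h k' hk hm; apply: h; apply: maps_mono hm. Qed.

Theorem theorem6p2 (n m : nat) (s1 : 'I_n -> 'I_n -> bool) (s2 : 'I_m -> 'I_m -> bool) :
  3 <= n -> 3 <= m ->
  signed_graph (@cyc_adj n) s1 -> signed_graph (@cyc_adj m) s2 ->
  chis_eq (cprod_adj (@cyc_adj n) (@cyc_adj m)) (cprod_sg s1 s2)
          (chis_table (cycle_type s1) (cycle_type s2)).
Proof.
move=> hn hm sg1 sg2.
rewrite /cycle_type !neg_edges_odd.
case hb1 : (bxs s1); case hb2 : (bxs s2); case ho1 : (odd n); case ho2 : (odd m) => /=.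
- (* UO x UO *) split.
  + apply: (@ub n m s1 s2 3 3 2 [:: (0,2)] [:: (0,2)] [:: (1,2)] [:: 0; 1; 2; 1; 2; 0; 2; 0; 1] [:: 0; 0; 1; 0; 1; 1; 1; 1; 1] _ _ (fO hn ho1 hb1 sg1) (fO hm ho2 hb2 sg2) hn).
    by vm_compute.
  + apply: lower_from; apply: no2 => //; rewrite ?hb1 ?hb2 ?ho1 ?ho2 //.
- (* UO x UE *) split.
  + apply: (@ub n m s1 s2 3 4 4 [:: (0,2)] [:: (0,3)] [:: (1,4); (2,3); (3,4)] [:: 0; 1; 2; 3; 1; 3; 0; 4; 4; 2; 3; 0] [:: 0; 0; 0; 1; 0; 0; 0; 0; 1; 1; 0; 0] _ _ (fO hn ho1 hb1 sg1) (fU hm ho2 hb2 sg2) hn).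
    by vm_compute.
  + apply: lower_from; apply: no4 => //; rewrite ?hb1 ?hb2 ?ho1 ?ho2 //.
- (* UE x UO *) split.
  + apply: (@ub n m s1 s2 4 3 4 [:: (0,3)] [:: (0,2)] [:: (1,4); (2,3); (3,4)] [:: 0; 1; 4; 1; 3; 2; 2; 0; 3; 3; 4; 0] [:: 0; 0; 1; 0; 0; 1; 0; 0; 0; 1; 0; 0] _ _ (fU hn ho1 hb1 sg1) (fO hm ho2 hb2 sg2) hn).
    by vm_compute.
  + apply: lower_from; apply: no4 => //; rewrite ?hb1 ?hb2 ?ho1 ?ho2 //.
- (* UE x UE *) split.
  + apply: (@ub n m s1 s2 4 4 3 [:: (0,3)] [:: (0,3)] [:: (2,3)] [:: 0; 1; 2; 3; 1; 2; 3; 0; 2; 3; 0; 1; 3; 0; 1; 2] [:: 0; 0; 0; 1; 0; 0; 1; 1; 0; 1; 1; 1; 1; 1; 1; 1] _ _ (fU hn ho1 hb1 sg1) (fU hm ho2 hb2 sg2) hn).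
    by vm_compute.
  + apply: lower_from; apply: no3 => //; rewrite ?hb1 ?hb2 ?ho1 ?ho2 //.
- (* UO x BO *) split.
  + apply: (@ub n m s1 s2 3 3 4 [:: (0,2)] [::] [:: (1,4); (2,3); (3,4)] [:: 0; 1; 2; 1; 3; 0; 4; 2; 3] [:: 0; 0; 0; 0; 0; 0; 1; 1; 0] _ _ (fO hn ho1 hb1 sg1) (fO hm ho2 hb2 sg2) hn).
    by vm_compute.
  + apply: lower_from; apply: no4 => //; rewrite ?hb1 ?hb2 ?ho1 ?ho2 //.
- (* UO x BE *) split.
  + apply: (@ub n m s1 s2 3 2 2 [:: (0,2)] [::] [:: (1,2)] [:: 0; 1; 1; 2; 2; 0] [:: 0; 0; 0; 1; 1; 1] _ _ (fO hn ho1 hb1 sg1) (fE hm ho2 hb2 sg2) hn).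
    by vm_compute.
  + apply: lower_from; apply: no2 => //; rewrite ?hb1 ?hb2 ?ho1 ?ho2 //.
- (* UE x BO *) split.
  + apply: (@ub n m s1 s2 4 3 4 [:: (0,3)] [::] [:: (1,4); (2,3); (3,4)] [:: 0; 1; 2; 1; 2; 0; 2; 0; 4; 3; 4; 1] [:: 0; 0; 0; 0; 0; 0; 0; 0; 0; 1; 0; 1] _ _ (fU hn ho1 hb1 sg1) (fO hm ho2 hb2 sg2) hn).
    by vm_compute.
  + apply: lower_from; apply: no4 => //; rewrite ?hb1 ?hb2 ?ho1 ?ho2 //.
- (* UE x BE *) split.
  + apply: (@ub n m s1 s2 4 2 3 [:: (0,3)] [::] [:: (2,3)] [:: 0; 1; 1; 2; 2; 3; 3; 0] [:: 0; 0; 0; 0; 0; 1; 1; 1] _ _ (fU hn ho1 hb1 sg1) (fE hm ho2 hb2 sg2) hn).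
    by vm_compute.
  + apply: lower_from; apply: no3 => //; rewrite ?hb1 ?hb2 ?ho1 ?ho2 //.
- (* BO x UO *) split.
  + apply: (@ub n m s1 s2 3 3 4 [::] [:: (0,2)] [:: (1,4); (2,3); (3,4)] [:: 0; 1; 4; 1; 3; 2; 2; 0; 3] [:: 0; 0; 1; 0; 0; 1; 0; 0; 0] _ _ (fO hn ho1 hb1 sg1) (fO hm ho2 hb2 sg2) hn).
    by vm_compute.
  + apply: lower_from; apply: no4 => //; rewrite ?hb1 ?hb2 ?ho1 ?ho2 //.
- (* BO x UE *) split.
  + apply: (@ub n m s1 s2 3 4 4 [::] [:: (0,3)] [:: (1,4); (2,3); (3,4)] [:: 0; 1; 2; 3; 1; 2; 0; 4; 2; 0; 4; 1] [:: 0; 0; 0; 1; 0; 0; 0; 0; 0; 0; 0; 1] _ _ (fO hn ho1 hb1 sg1) (fU hm ho2 hb2 sg2) hn).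
    by vm_compute.
  + apply: lower_from; apply: no4 => //; rewrite ?hb1 ?hb2 ?ho1 ?ho2 //.
- (* BE x UO *) split.
  + apply: (@ub n m s1 s2 2 3 2 [::] [:: (0,2)] [:: (1,2)] [:: 0; 1; 2; 1; 2; 0] [:: 0; 0; 1; 0; 1; 1] _ _ (fE hn ho1 hb1 sg1) (fO hm ho2 hb2 sg2) hn).
    by vm_compute.
  + apply: lower_from; apply: no2 => //; rewrite ?hb1 ?hb2 ?ho1 ?ho2 //.
- (* BE x UE *) split.
  + apply: (@ub n m s1 s2 2 4 3 [::] [:: (0,3)] [:: (2,3)] [:: 0; 1; 2; 3; 1; 2; 3; 0] [:: 0; 0; 0; 1; 0; 0; 1; 1] _ _ (fE hn ho1 hb1 sg1) (fU hm ho2 hb2 sg2) hn).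
    by vm_compute.
  + apply: lower_from; apply: no3 => //; rewrite ?hb1 ?hb2 ?ho1 ?ho2 //.
- (* BO x BO *) split.
  + apply: (@ub n m s1 s2 3 3 2 [::] [::] [:: ] [:: 0; 1; 2; 1; 2; 0; 2; 0; 1] [:: 0; 0; 0; 0; 0; 0; 0; 0; 0] _ _ (fO hn ho1 hb1 sg1) (fO hm ho2 hb2 sg2) hn).
    by vm_compute.
  + apply: lower_from; apply: no2 => //; rewrite ?hb1 ?hb2 ?ho1 ?ho2 //.
- (* BO x BE *) split.
  + apply: (@ub n m s1 s2 3 2 2 [::] [::] [:: ] [:: 0; 1; 1; 2; 2; 0] [:: 0; 0; 0; 0; 0; 0] _ _ (fO hn ho1 hb1 sg1) (fE hm ho2 hb2 sg2) hn).
    by vm_compute.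
  + apply: lower_from; apply: no2 => //; rewrite ?hb1 ?hb2 ?ho1 ?ho2 //.
- (* BE x BO *) split.
  + apply: (@ub n m s1 s2 2 3 2 [::] [::] [:: ] [:: 0; 1; 2; 1; 2; 0] [:: 0; 0; 0; 0; 0; 0] _ _ (fE hn ho1 hb1 sg1) (fO hm ho2 hb2 sg2) hn).
    by vm_compute.
  + apply: lower_from; apply: no2 => //; rewrite ?hb1 ?hb2 ?ho1 ?ho2 //.
- (* BE x BE *) split.
  + apply: (@ub n m s1 s2 2 2 1 [::] [::] [:: ] [:: 0; 1; 1; 0] [:: 0; 0; 0; 0] _ _ (fE hn ho1 hb1 sg1) (fE hm ho2 hb2 sg2) hn).
    by vm_compute.
  + apply: lower_from; apply: no1 => //; rewrite ?hb1 ?hb2 ?ho1 ?ho2 //.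
Qed.
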